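(* Consider the problem $\min_{x\in\mathbb{R}^n} f(x):=F(x)+h(x)$, where $h:\mathbb{R}^n\to\mathbb{R}\cup\{+\infty\}$ is a proper closed convex function, $F:\mathbb{R}^n\to\mathbb{R}$ is lower semicontinuous (possibly nonconvex), $\mathrm{dom}\, f=\mathrm{dom}\, h$, and there is $f_\infty>-\infty$ with $f(x)\ge f_\infty$ for all $x\in\mathrm{dom}\, f$. Fix $q\in[0,2)$, $\rho>0$, $L>0$, $\delta\ge0$ and $\beta,\zeta\in[0,1)$, and set for all $k\ge0$ $$\delta_k=\frac{\delta}{(k+1)^{\frac{\beta(2-q)}{2}}},\qquad \alpha_k=\frac{1}{(L+q\rho)(k+1)^{\zeta}}.$$ Let $x_0\in\mathrm{dom}\, h$ and let $(x_k)_{k\ge0}$ be generated by $x_{k+1}=\mathrm{prox}_{\alpha_k h}(x_k-\alpha_k g_k)$, where $\mathrm{prox}_{\gamma h}(z):=\arg\min_{y\in\mathrm{dom}\, h}\{h(y)+\tfrac{1}{2\gamma}\|z-y\|^2\}$ and at each iteration $k$ the vector $g_k$ satisfies $$F(x)-\big(F(x_k)+\langle g_k,x-x_k\rangle\big)\le \frac{L}{2}\|x-x_k\|^2+\delta_k\|x-x_k\|^q\quad\text{for all } x\in\mathrm{dom}\, f.$$ Let $p_{j+1}:=-\frac{1}{\alpha_j}(x_{j+1}-x_j)-g_j\in\partial h(x_{j+1})$. Then for all $k\ge0$, $$\min_{j=0,\dots,k}\|g_j+p_{j+1}\|^2\le \frac{2(L+q\rho)(f(x_0)-f_\infty)}{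(1-\zeta)(k+1)^{1-\zeta}}+\frac{(2-q)(L+q\rho)\,\delta^{\frac{2}{2-q}}}{(1-\zeta)(1-\beta)\,\rho^{\frac{q}{2-q}}\,(k+1)^{\beta-\zeta}}.$$
   Context: $\|\cdot\|$ is the Euclidean norm and $\partial h$ the convex subdifferential of $h$. The condition on $g_k$ is the paper's ''inexact first-order $(\delta_k,L)$-oracle of degree $q$'' at $x_k$. *)

(* Defs.v *)
From mathcomp Require Import all_boot all_order all_algebra.
From mathcomp Require Import all_classical all_reals all_analysis.
Set Implicit Arguments. Unset Strict Implicit. Unset Printing Implicit Defensive.
Import Order.TTheory GRing.Theory Num.Theory.
Local Open Scope ring_scope.

Section Defs.
Variables (R : realType) (n : nat).
Local Notation V := 'rV[R]_n.

Definition dotv (u v : V) : R := \sum_(i < n) u ord0 i * v ord0 i.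
Definition enorm (u : V) : R := Num.sqrt (dotv u u).

Definition edom (h : V -> \bar R) : set V := [set x | (h x < +oo)%E].

Definition proper_fun (h : V -> \bar R) : Prop :=
  (forall x, (-oo < h x)%E) /\ exists x, (h x < +oo)%E.

(* closed = lower semicontinuous (closed epigraph) w.r.t. the Euclidean norm *)
Definition elsc (h : V -> \bar R) : Prop :=
  forall x (a : R), (a%:E < h x)%E ->
    exists2 e : R, 0 < e & forall y, enorm (y - x) < e -> (a%:E < h y)%E.

Definition lsc (F : V -> R) : Prop := elsc (fun x => (F x)%:E).

Definition convex_efun (h : V -> \bar R) : Prop :=
  forall x y (t : R), (h x < +oo)%E -> (h y < +oo)%E -> 0 <= t <= 1 ->
    (h (t *: x + (1 - t) *: y)%R <= t%:E * h x + (1 - t)%:E * h y)%E.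

Definition is_prox (h : V -> \bar R) (gamma : R) (z p : V) : Prop :=
  (h p < +oo)%E /\
  forall y, (h y < +oo)%E ->
    (h p + (1 / (2 * gamma) * enorm (z - p)%R ^+ 2)%R%:E
       <= h y + (1 / (2 * gamma) * enorm (z - y)%R ^+ 2)%R%:E)%E.
End Defs.

(* Main.v *)
Require Import Defs.
From mathcomp Require Import all_boot all_order all_algebra.
From mathcomp Require Import all_classical all_reals all_analysis.
From mathcomp Require Import ring lra.
Import Order.TTheory GRing.Theory Num.Theory.
Local Open Scope ring_scope.


Section Aux.
Variables (R : realType) (n : nat).
Local Notation V := 'rV[R]_n.

Lemma dotvDZl (a b : R) (u v w : V) :
  dotv (a *: u + b *: v) w = a * dotv u w + b * dotv v w.
Proof.
rewrite /dotv !mulr_sumr -big_split; apply: eq_bigr => i _; rewrite !mxE /=; by rewrite !mulrA -mulrDl.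
Qed.

Lemma dotvC (u v : V) : dotv u v = dotv v u.
Proof. by apply: eq_bigr => i _; rewrite mulrC. Qed.

Lemma dotv_ge0 (u : V) : 0 <= dotv u u.
Proof. by apply: sumr_ge0 => i _; rewrite -expr2 sqr_ge0. Qed.

Lemma enorm2 (u : V) : enorm u ^+ 2 = dotv u u.
Proof. by rewrite /enorm sqr_sqrtr // dotv_ge0. Qed.

Lemma enorm_ge0 (u : V) : 0 <= enorm u.
Proof. exact: sqrtr_ge0. Qed.

Lemma dotvDZr (a b : R) (u v w : V) :
  dotv w (a *: u + b *: v) = a * dotv w u + b * dotv w v.
Proof. by rewrite dotvC dotvDZl (dotvC u) (dotvC v). Qed.

Lemma enorm2DZ (a b : R) (u v : V) :
  enorm (a *: u + b *: v) ^+ 2 = a ^+ 2 * dotv u u + 2 * a * b * dotv u v + b ^+ 2 * dotv v v.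
Proof.
rewrite enorm2 dotvDZl !dotvDZr (dotvC v u); ring.
Qed.

End Aux.

Section Pw.
Variable R : realType.

Lemma amgm (X Y w : R) : 0 <= X -> 0 <= Y -> 0 <= w <= 1 ->
  powR X w * powR Y (1 - w) <= w * X + (1 - w) * Y.
Proof.
move=> X0 Y0 /andP[w0 w1].
have [->|wn0] := eqVneq w 0.
  by rewrite powRr0 subr0 powRr1 // !mul1r mul0r add0r.
have [->|wn1] := eqVneq w 1.
  by rewrite powRr1 // subrr powRr0 mulr1 mul1r mul0r addr0.
have wp : 0 < w by rewrite lt_neqAle eq_sym wn0.
have wq : 0 < 1 - w by rewrite subr_gt0 lt_neqAle wn1.
have := @conjugate_powR R (powR X w) (powR Y (1 - w)) (w^-1) ((1 - w)^-1)
  (powR_ge0 _ _) (powR_ge0 _ _) _ _ _.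
rewrite -!powRrM !mulfV ?gt_eqF // !powRr1 // !invrK.
move=> H; rewrite (mulrC w X) (mulrC (1 - w) Y); apply: H.
- by rewrite invr_gt0.
- by rewrite invr_gt0.
- by rewrite addrC subrK.
Qed.

End Pw.


Section Pw2.
Variable R : realType.

Lemma powRV (x r : R) : 0 < x -> powR (x^-1) r = (powR x r)^-1.
Proof.
move=> x0; rewrite -powR_inv1 ?ltW // -powRrM mulrC powRrM powR_inv1 //.
exact: powR_ge0.
Qed.

Lemma young (q rho d t : R) : 0 <= q < 2 -> 0 < rho -> 0 <= d -> 0 <= t ->
  d * powR t q <= q * rho / 2 * t ^+ 2
     + (2 - q) / 2 * (powR d (2 / (2 - q)) / powR rho (q / (2 - q))).
Proof.
move=> /andP[q0 q2] r0 d0 t0.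
have q2' : 0 < 2 - q by rewrite subr_gt0.
have X0 : 0 <= rho * t ^+ 2 by rewrite mulr_ge0 ?sqr_ge0 ?ltW.
have Y0 : 0 <= powR d (2 / (2 - q)) / powR rho (q / (2 - q)).
  by rewrite mulr_ge0 ?powR_ge0 ?invr_ge0 ?powR_ge0.
have w0 : 0 <= q / 2 <= 1.
  by apply/andP; split; [rewrite divr_ge0 | rewrite ler_pdivrMr //; lra].
have E1 : powR (rho * t ^+ 2) (q / 2) = powR rho (q / 2) * powR t q.
  rewrite powRM ?sqr_ge0 ?ltW // -(powR_mulrn 2 t0) -powRrM.
  by congr (_ * powR t _); field.
have E2 : powR (powR d (2 / (2 - q)) / powR rho (q / (2 - q))) (1 - q / 2)
    = d / powR rho (q / 2).
  rewrite powRM ?powR_ge0 ?invr_ge0 ?powR_ge0 // powRV ?powR_gt0 // -!powRrM.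
  have -> : 2 / (2 - q) * (1 - q / 2) = 1 :> R.
    by field; rewrite gt_eqF.
  have -> : q / (2 - q) * (1 - q / 2) = q / 2 :> R.
    by field; rewrite gt_eqF.
  by rewrite powRr1.
have := @amgm R _ _ _ X0 Y0 w0.
rewrite E1 E2.
have rp : 0 < powR rho (q / 2) by rewrite powR_gt0.
have -> : powR rho (q / 2) * powR t q * (d / powR rho (q / 2)) = d * powR t q.
  by field; rewrite gt_eqF.
move=> H; apply: le_trans H _.
rewrite le_eqVlt; apply/orP; left; apply/eqP; field; by rewrite gt_eqF // powR_gt0.
Qed.

Lemma sum_powN (b : R) (K : nat) : 0 <= b < 1 ->
  \sum_(j < K) (powR (j.+1)%:R b)^-1 <= powR K%:R (1 - b) / (1 - b).
Proof.
move=> /andP[b0 b1]; have b1' : 0 < 1 - b by rewrite subr_gt0.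
elim: K => [|K IH].
  by rewrite big_ord0 divr_ge0 ?powR_ge0 ?ltW.
rewrite big_ord_recr /=; apply: le_trans (lerD IH (le_refl _)) _.
have K0 : (0 : R) <= K%:R by [].
have K1 : (0 : R) <= K.+1%:R by [].
have := @amgm R _ _ (1 - b) K0 K1.
have -> : 1 - (1 - b) = b by ring.
have P0 : 0 < powR (K.+1)%:R b by rewrite powR_gt0 // ltr0n.
have -> : powR K.+1%:R (1 - b) = K.+1%:R / powR K.+1%:R b.
  by rewrite powRB ?powRr1 // pnatr_eq0 implybT.
set A := powR K%:R (1 - b); set P := powR K.+1%:R b.
move=> /(_ _) H; have {H} H : A * P <= (1 - b) * K%:R + b * K.+1%:R.
  by apply: H; apply/andP; split; [rewrite ltW | lra].
rewrite -subr_ge0.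
have -> : K.+1%:R / P / (1 - b) - (A / (1 - b) + P^-1) =
   (K.+1%:R - (A * P + (1 - b))) / (P * (1 - b)).
  by field; rewrite !gt_eqF.
apply: divr_ge0; last by rewrite mulr_ge0 ?ltW.
rewrite subr_ge0.
move: H; rewrite -natr1; lra.
Qed.
End Pw2.


Section Prox.
Variables (R : realType) (n : nat).
Local Notation V := 'rV[R]_n.

Lemma finE (h : V -> \bar R) y : proper_fun h -> (h y < +oo)%E -> h y = (fine (h y))%:E.
Proof.
move=> [hm _] hy; rewrite fineK //; apply/fin_numPlt; by rewrite hm hy.
Qed.

Arguments finE {h y}.

Lemma prox_ineq (h : V -> \bar R) (a : R) (z p y : V) :
  proper_fun h -> convex_efun h -> 0 < a -> is_prox h a z p -> (h y < +oo)%E ->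
  fine (h p) <= fine (h y) - a^-1 * dotv (z - p) (y - p).
Proof.
move=> hP hC a0 [hp hmin] hy.
set P := fine (h p); set Y := fine (h y).
set D := dotv (z - p) (y - p); set Nv := dotv (y - p) (y - p).
have Nv0 : 0 <= Nv by exact: dotv_ge0.
have key : forall t, 0 < t <= 1 -> t * P <= t * Y - t / a * D + t ^+ 2 / (2 * a) * Nv.
  move=> t /andP[t0 t1].
  have tt : 0 <= t <= 1 by rewrite ltW.
  have := hC y p t hy hp tt.
  set w := t *: y + (1 - t) *: p.
  rewrite (finE hP hy) (finE hP hp) -!EFinM -EFinD => hw.
  have hw' : (h w < +oo)%E by apply: le_lt_trans hw _; exact: ltry.
  have := hmin w hw'.
  rewrite (finE hP hw') (finE hP hp) -!EFinD lee_fin => H.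
  have hw2 : fine (h w) <= t * Y + (1 - t) * P.
    by rewrite -lee_fin -(finE hP hw').
  have ezw : z - w = 1 *: (z - p) + (- t) *: (y - p).
    by apply/rowP => i; rewrite /w !mxE; ring.
  have ezp : z - p = 1 *: (z - p) + 0 *: (y - p).
    by rewrite scale1r scale0r addr0.
  move: H; rewrite ezw enorm2DZ ezp enorm2DZ -ezp -/D -/Nv.
  set Nz := dotv (z - p) (z - p).
  move=> H.
  have H2 := le_trans H (lerD hw2 (le_refl _)).
  have e1 : 1 / (2 * a) * (1 ^+ 2 * Nz + 2 * 1 * - t * D + (- t) ^+ 2 * Nv)
     = 1 / (2 * a) * Nz - t / a * D + t ^+ 2 / (2 * a) * Nv.
    by field; rewrite gt_eqF.
  have e2 : 1 / (2 * a) * (1 ^+ 2 * Nz + 2 * 1 * 0 * D + 0 ^+ 2 * Nv)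
     = 1 / (2 * a) * Nz.
    by field; rewrite gt_eqF.
  move: H2; rewrite e1 e2 -/P; nra.
rewrite -subr_ge0; set Del := _ - _.
rewrite leNgt; apply/negP => Dn.
set E := - Del.
have Ep : 0 < E by rewrite oppr_gt0.
set S := a * E + Nv.
have aE : 0 < a * E by rewrite mulr_gt0.
have Sp : 0 < S by rewrite ltr_wpDr.
set t := a * E / S.
have t0 : 0 < t by rewrite divr_gt0.
have t1 : t <= 1 by rewrite ler_pdivrMr // mul1r lerDl.
have tS : t * S = a * E by rewrite /t mulfVK // gt_eqF.
have := key t; rewrite t0 t1 => /(_ isT) K.
have eK : t * Y - t / a * D + t ^+ 2 / (2 * a) * Nv - t * P
   = t * (E + t * Nv / (2 * a)) - 2 * t * E.
  by rewrite /E /Del; field; rewrite gt_eqF.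
have K1 : 0 <= t * (E + t * Nv / (2 * a)) - 2 * t * E by rewrite -eK subr_ge0.
have K2 : 2 * a * E <= t * Nv.
  have eX : t * Nv / (2 * a) * (2 * a) = t * Nv by rewrite mulfVK // gt_eqF ?mulr_gt0.
  move: K1 eX; set X := t * Nv / (2 * a) => K1 eX.
  have XE : E <= X by nra.
  rewrite -eX; nra.
have : 2 * a * E * S <= a * E * Nv.
  by rewrite -tS; nra.
rewrite /S -mulrA; move: aE Nv0; set u := a * E => aE Nv0 HH.
have : 0 < u * u by rewrite mulr_gt0.
have e3 : 2 * a * (E * (u + Nv)) = 2 * (u * u) + 2 * (u * Nv) by rewrite /u; ring.
move: HH; rewrite e3; nra.
Qed.
End Prox.


Lemma enorm2Z (R : realType) (n : nat) (s : R) (u : 'rV[R]_n) :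
  enorm (s *: u) ^+ 2 = s ^+ 2 * dotv u u.
Proof.
rewrite enorm2 /dotv mulr_sumr; apply: eq_bigr => i _; rewrite !mxE.
by rewrite expr2 !mulrA; congr (_ * _); rewrite mulrC !mulrA.
Qed.

Theorem theorem2 (R : realType) (n : nat)
  (F : 'rV[R]_n -> R) (h : 'rV[R]_n -> \bar R) (f_inf : R)
  (q rho L delta beta zeta : R)
  (x g : nat -> 'rV[R]_n) :
  proper_fun h -> elsc h -> convex_efun h ->
  lsc F ->
  (forall y, (h y < +oo)%E -> ((F y)%:E + h y >= f_inf%:E)%E) ->
  0 <= q < 2 -> 0 < rho -> 0 < L -> 0 <= delta ->
  0 <= beta < 1 -> 0 <= zeta < 1 ->
  let delta_k := fun k : nat => delta / powR (k.+1)%:R (beta * (2 - q) / 2) in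
  let alpha_k := fun k : nat => 1 / ((L + q * rho) * powR (k.+1)%:R zeta) in
  (h (x 0%N) < +oo)%E ->
  (forall k, is_prox h (alpha_k k) (x k - alpha_k k *: g k) (x k.+1)) ->
  (forall k y, (h y < +oo)%E ->
     F y - (F (x k) + dotv (g k) (y - x k))
       <= L / 2 * enorm (y - x k) ^+ 2 + delta_k k * powR (enorm (y - x k)) q) ->
  (* p (j+1) = -(1/alpha_j)(x_{j+1} - x_j) - g_j *)
  let p := fun i : nat => - (1 / alpha_k i.-1) *: (x i - x i.-1) - g i.-1 in
  forall k : nat,
    \big[Order.min/ enorm (g 0%N + p 1%N) ^+ 2]_(j < k.+1) (enorm (g j + p j.+1) ^+ 2)
    <= 2 * (L + q * rho) * (F (x 0%N) + fine (h (x 0%N)) - f_inf)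
         / ((1 - zeta) * powR (k.+1)%:R (1 - zeta))
       + (2 - q) * (L + q * rho) * powR delta (2 / (2 - q))
         / ((1 - zeta) * (1 - beta) * powR rho (q / (2 - q))
            * powR (k.+1)%:R (beta - zeta)).
Proof.
move=> hP _ hC _ hinf /andP[q0 q2] r0 L0 d0 /andP[b0 b1] /andP[z0 z1].
move=> delta_k alpha_k hx0 hprox horacle p k.
set c := L + q * rho.
have c0 : 0 < c by rewrite /c; have := mulr_ge0 q0 (ltW r0); lra.
have q2' : 0 < 2 - q by rewrite subr_gt0.
have pw1 : forall j : nat, 1 <= powR (j.+1)%:R zeta.
  move=> j; have := @ler_powR R (j.+1)%:R _ 0 zeta z0; rewrite powRr0; apply.
  by rewrite ler1n.
set ia := fun j : nat => c * powR (j.+1)%:R zeta.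
have iac : forall j, c <= ia j.
  by move=> j; rewrite /ia -{1}(mulr1 c) ler_pM2l.
have ia0 : forall j, 0 < ia j by move=> j; apply: lt_le_trans (iac j).
have alE : forall j, alpha_k j = (ia j)^-1 by move=> j; rewrite /alpha_k div1r.
have dom : forall j, (h (x j) < +oo)%E.
  by case=> [|j] //; case: (hprox j).
set fv := fun j => F (x j) + fine (h (x j)).
set Dd := powR delta (2 / (2 - q)); set Rq := powR rho (q / (2 - q)).
set E0 := (2 - q) / 2 * (Dd / Rq).
set Ej := fun j : nat => E0 / powR (j.+1)%:R beta.
set Nd := fun j => dotv (x j.+1 - x j) (x j.+1 - x j).
have Nd0 : forall j, 0 <= Nd j by move=> j; exact: dotv_ge0.
have step : forall j, fv j.+1 + ia j / 2 * Nd j <= fv j + Ej j.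
  move=> j.
  have al0 : 0 < alpha_k j by rewrite alE invr_gt0.
  have Hp := @prox_ineq _ _ _ _ _ _ _ hP hC al0 (hprox j) (dom j).
  rewrite alE invrK in Hp.
  set d := x j.+1 - x j.
  have e1 : x j - (ia j)^-1 *: g j - x j.+1 = (-(ia j)^-1) *: g j + (-1) *: d.
    by apply/rowP => i; rewrite !mxE; ring.
  have e2 : x j - x j.+1 = (-1) *: d + 0 *: d.
    by apply/rowP => i; rewrite !mxE; ring.
  rewrite e1 e2 dotvDZl !dotvDZr -/(Nd j) in Hp.
  set Gd := dotv (g j) d.
  have HpE : ia j * ((- (ia j)^-1) * ((-1) * Gd + 0 * Gd)
      + (-1) * ((-1) * Nd j + 0 * Nd j)) = Gd + ia j * Nd j.
    by field; rewrite gt_eqF.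
  rewrite HpE in Hp.
  have Ho := horacle j (x j.+1) (dom j.+1).
  rewrite -/d -/Gd enorm2 -/(Nd j) in Ho.
  have dk0 : 0 <= delta_k j by rewrite divr_ge0 ?powR_ge0.
  have Hy := @young R q rho (delta_k j) (enorm d) (introT andP (conj q0 q2)) r0 dk0 (@enorm_ge0 _ _ d).
  rewrite enorm2 -/(Nd j) in Hy.
  have EE : (2 - q) / 2 * (powR (delta_k j) (2 / (2 - q)) / powR rho (q / (2 - q))) = Ej j.
    rewrite /delta_k powRM ?powR_ge0 ?invr_ge0 // powRV ?powR_gt0 ?ltr0n // -powRrM.
    have -> : beta * (2 - q) / 2 * (2 / (2 - q)) = beta by field; rewrite gt_eqF.
    have Kb : 0 < powR (j.+1)%:R beta by rewrite powR_gt0 ?ltr0n.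
    have Rq0 : 0 < Rq by rewrite powR_gt0.
    rewrite /Ej /E0 -/Dd -/Rq; field; rewrite !gt_eqF //.
  rewrite EE in Hy.
  rewrite /fv; move: (iac j) (Nd0 j) Hp Ho Hy; rewrite /c.
  set Ft := F _; set F0 := F _; set H1 := fine _; set H0 := fine _.
  set I := ia j; set N := Nd j; set T := delta_k j * _; set EJ := Ej j.
  nra.
have tele : forall K, \sum_(j < K) (ia j / 2 * Nd j - Ej j) <= fv 0%N - fv K.
  elim=> [|K IH]; first by rewrite big_ord0 subrr.
  rewrite big_ord_recr /=; have := step K; lra.
have finf : forall j, f_inf <= fv j.
  move=> j; have := hinf _ (dom j).
  by rewrite (@finE R n h (x j) hP (dom j)) -EFinD lee_fin.
have mE : forall j, enorm (g j + p j.+1) ^+ 2 = ia j ^+ 2 * Nd j.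
  by move=> j; rewrite /p /= alE div1r invrK addrC subrK enorm2Z sqrrN.
set Mn := \big[Order.min/_]_(j < k.+1) _.
have Mn0 : 0 <= Mn.
  apply: le_bigmin => [|j _]; rewrite mE mulr_ge0 ?sqr_ge0 //.
have Mle : forall j : 'I_k.+1, Mn <= ia j ^+ 2 * Nd j.
  by move=> j; rewrite -mE; exact: bigmin_le.
have sumA : Mn * \sum_(j < k.+1) (ia j)^-1 <= \sum_(j < k.+1) 2 * (ia j / 2 * Nd j).
  rewrite mulr_sumr; apply: ler_sum => j _.
  have iv : 0 <= (ia j)^-1 by rewrite invr_ge0 ltW.
  have := ler_wpM2r iv (Mle j).
  have -> : ia j ^+ 2 * Nd j * (ia j)^-1 = 2 * (ia j / 2 * Nd j).
    by field; rewrite gt_eqF.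
  done.
have E00 : 0 <= E0 by rewrite mulr_ge0 ?divr_ge0 ?powR_ge0 ?ltW.
have b1' : 0 < 1 - beta by rewrite subr_gt0.
have z1' : 0 < 1 - zeta by rewrite subr_gt0.
set Q := powR (k.+1)%:R (1 - beta).
have sumE : \sum_(j < k.+1) Ej j <= E0 * (Q / (1 - beta)).
  rewrite /Ej; under eq_bigr do rewrite mulrC.
  rewrite -mulr_suml mulrC; apply: ler_wpM2l => //.
  by apply: sum_powN; rewrite b0 b1.
have sumAl : (k.+1)%:R * (ia k)^-1 <= \sum_(j < k.+1) (ia j)^-1.
  have -> : (k.+1)%:R * (ia k)^-1 = \sum_(j < k.+1) (ia k)^-1.
    by rewrite sumr_const card_ord mulr_natl.
  apply: ler_sum => j _.
  rewrite lef_pV2 ?posrE // /ia ler_pM2l //.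
  apply: ge0_ler_powR => //; rewrite ?nnegrE ?ler0n // ler_nat.
  exact: ltn_ord.
set P1 := powR (k.+1)%:R (1 - zeta).
set P2 := powR (k.+1)%:R (beta - zeta).
have Kz : 0 < powR (k.+1)%:R zeta by rewrite powR_gt0 ?ltr0n.
have P10 : 0 < P1 by rewrite powR_gt0 ?ltr0n.
have P20 : 0 < P2 by rewrite powR_gt0 ?ltr0n.
have eP1 : (k.+1)%:R * (ia k)^-1 = P1 / c.
  rewrite /P1 powRB ?powRr1 ?ler0n ?pnatr_eq0 ?implybT // /ia.
  by field; rewrite !gt_eqF.
have eQ : Q = P1 / P2.
  rewrite /Q /P1 /P2 -powRB ?pnatr_eq0 ?implybT //; congr powR; ring.
have tk := tele k.+1.
rewrite sumrB in tk.
have Htot : Mn * (P1 / c) <= 2 * (E0 * (Q / (1 - beta)) + (fv 0%N - f_inf)).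
  rewrite -eP1; apply: le_trans (ler_wpM2l Mn0 sumAl) _.
  apply: le_trans sumA _; rewrite -mulr_sumr; apply: ler_wpM2l => //.
  have := finf k.+1; lra.
have A00 : 0 <= fv 0%N - f_inf by rewrite subr_ge0.
have Rq0 : 0 < Rq by rewrite powR_gt0.
have Mn1 : Mn <= 2 * c * (fv 0%N - f_inf) / P1
    + (2 - q) * c * Dd / ((1 - beta) * Rq * P2).
  have -> : 2 * c * (fv 0%N - f_inf) / P1 + (2 - q) * c * Dd / ((1 - beta) * Rq * P2)
     = 2 * (E0 * (Q / (1 - beta)) + (fv 0%N - f_inf)) / (P1 / c).
    by rewrite eQ /E0; field; rewrite !gt_eqF.
  by rewrite ler_pdivlMr // divr_gt0.
rewrite -/(fv 0%N) -/Dd -/Rq -/P1 -/P2.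
apply: le_trans Mn1 _.
have Dd0 : 0 <= Dd by rewrite powR_ge0.
have le1 : forall u, 0 <= u -> u <= u / (1 - zeta).
  by move=> u u0; rewrite ler_pdivlMr //; nra.
apply: lerD.
  have -> : 2 * c * (fv 0%N - f_inf) / ((1 - zeta) * P1)
    = 2 * c * (fv 0%N - f_inf) / P1 / (1 - zeta) by field; rewrite !gt_eqF.
  apply: le1; apply: divr_ge0 (ltW P10); apply: mulr_ge0 A00.
  by rewrite mulr_ge0 // ltW.
have -> : (2 - q) * c * Dd / ((1 - zeta) * (1 - beta) * Rq * P2)
  = (2 - q) * c * Dd / ((1 - beta) * Rq * P2) / (1 - zeta) by field; rewrite !gt_eqF.
apply: le1; apply: divr_ge0.
  by rewrite !mulr_ge0 // ltW.
by rewrite ltW // !mulr_gt0.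
Qed.
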